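(* Let $0\le\beta<1$ and $\gamma=\frac34+\frac14\beta$, and let $C>0$. There exist constants $c>0$ and $N$ such that for all $n\ge N$, all integers $0\le k\le Cn^{\beta}$, and every multiset $\mathcal{C}$ of $n-k$ unlabelled graphs on $n-1$ vertices, there is a set $J\subseteq\{0,\dots,n-1\}$ with $|J|\ge n-cn^{\gamma}$ such that for any two graphs $G,H$ on $n$ vertices whose decks both contain $\mathcal{C}$ as a sub-multiset, $d_t(G)=d_t(H)$ for every $t\in J$. (That is, from any $n-k$ cards of a graph of order $n$, the number $d_t$ of vertices of degree $t$ can be determined exactly for all but $O(n^\gamma)$ values of $t$.)
   Context: All graphs are finite, simple and undirected. For a graph $G'$ and integer $t$, $d_t(G')$ is the number of vertices of degree $t$ in $G'$. For $v\in V(G)$, the card $G-v$ is obtained by deleting $v$ and its incident edges; the deck $\mathcal{D}(G)$ is the multiset of the $n$ cards $G-v$, $v\in V(G)$, up to isomorphism. *)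

(* Defs.v *)
From Stdlib Require Import Reals Arith List.
Import ListNotations.

(* A (labelled) graph on vertex set {0,...,n-1} is given by a boolean
   adjacency function; only its values on vertices < n matter. *)
Definition graph := nat -> nat -> bool.

Definition is_graph (n : nat) (g : graph) : Prop :=
  (forall i, i < n -> g i i = false) /\
  (forall i j, i < n -> j < n -> g i j = g j i).

Definition iso (m : nat) (g h : graph) : Prop :=
  exists f : nat -> nat,
    (forall i, i < m -> f i < m) /\
    (forall i j, i < m -> j < m -> f i = f j -> i = j) /\
    (forall i j, i < m -> j < m -> g i j = h (f i) (f j)).

(* the card G - v, relabelled onto {0,...,n-2} *)
Definition skip (v i : nat) : nat := if i <? v then i else S i.
Definition card (g : graph) (v : nat) : graph :=
  fun i j => g (skip v i) (skip v j).

(* the deck of G (on n vertices) contains the multiset Cs of unlabelled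
   graphs on n-1 vertices as a sub-multiset: the cards of Cs can be matched
   injectively with vertices v of G such that Cs_i is isomorphic to G - v. *)
Definition deck_contains (n : nat) (g : graph) (Cs : list graph) : Prop :=
  exists f : nat -> nat,
    (forall i, i < length Cs -> f i < n) /\
    (forall i j, i < length Cs -> j < length Cs -> f i = f j -> i = j) /\
    (forall i, i < length Cs -> iso (n - 1) (nth i Cs (fun _ _ => false)) (card g (f i))).

Definition degree (n : nat) (g : graph) (v : nat) : nat :=
  length (filter (fun u => g v u) (seq 0 n)).

Definition d_ (n : nat) (g : graph) (t : nat) : nat :=
  length (filter (fun v => Nat.eqb (degree n g v) t) (seq 0 n)).

(* Main.v *)
Require Import Defs.
From Stdlib Require Import Reals Bool Arith List Lia Lra ZArith Permutation Classical ClassicalEpsilon.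
Import ListNotations.

Fixpoint sm (f : nat -> nat) (l : list nat) : nat :=
  match l with [] => 0 | x :: r => f x + sm f r end.

Lemma sm_app f l1 l2 : sm f (l1 ++ l2) = sm f l1 + sm f l2.
Proof. induction l1; simpl; lia. Qed.

Lemma sm_ext_in f g l : (forall x, In x l -> f x = g x) -> sm f l = sm g l.
Proof. induction l; simpl; intros H; [reflexivity|]. rewrite (H a (or_introl eq_refl)), IHl; auto. Qed.

Lemma sm_le_in f g l : (forall x, In x l -> f x <= g x) -> sm f l <= sm g l.
Proof. induction l; simpl; intros H; auto. specialize (IHl (fun x h => H x (or_intror h))).
  specialize (H a (or_introl eq_refl)). lia. Qed.

Lemma sm_add f g l : sm (fun x => f x + g x) l = sm f l + sm g l.
Proof. induction l; simpl; lia. Qed.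

Lemma sm_perm f l1 l2 : Permutation l1 l2 -> sm f l1 = sm f l2.
Proof. induction 1; simpl; lia. Qed.

Lemma sm_map f g l : sm f (map g l) = sm (fun x => f (g x)) l.
Proof. induction l; simpl; auto. Qed.

Lemma sm_const c l : sm (fun _ => c) l = c * length l.
Proof. induction l; simpl; lia. Qed.

Lemma sm_mul c f l : sm (fun x => c * f x) l = c * sm f l.
Proof. induction l; simpl; lia. Qed.

Lemma len_filter p l : length (filter p l) = sm (fun x => if p x then 1 else 0) l.
Proof. induction l; simpl; auto. destruct (p a); simpl; lia. Qed.

Lemma sm_swap F l1 l2 :
  sm (fun x => sm (fun y => F x y) l2) l1 = sm (fun y => sm (fun x => F x y) l1) l2.
Proof. induction l1; simpl.
  - induction l2; simpl; auto.
  - rewrite IHl1. rewrite <- sm_add. reflexivity. Qed.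

Lemma sm_filter f p l : sm f (filter p l) = sm (fun x => if p x then f x else 0) l.
Proof. induction l; simpl; auto. destruct (p a); simpl; lia. Qed.

Lemma inj_sum (n m : nat) (f : nat -> nat) (F : nat -> nat) (B : nat) :
  (forall i, i < m -> f i < n) ->
  (forall i j, i < m -> j < m -> f i = f j -> i = j) ->
  (forall v, v < n -> F v <= B) ->
  sm (fun i => F (f i)) (seq 0 m) <= sm F (seq 0 n) /\
  sm F (seq 0 n) <= sm (fun i => F (f i)) (seq 0 m) + (n - m) * B /\ m <= n.
Proof.
  intros Hf Hinj HB.
  set (l := map f (seq 0 m)).
  assert (Hnd : NoDup l).
  { apply NoDup_map_NoDup_ForallPairs; [|apply seq_NoDup].
    intros a b Ha Hb. apply in_seq in Ha; apply in_seq in Hb. apply Hinj; lia. }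
  set (p := fun v => if in_dec Nat.eq_dec v l then true else false).
  assert (Hperm : Permutation l (filter p (seq 0 n))).
  { apply NoDup_Permutation; auto. apply NoDup_filter, seq_NoDup.
    intro x; rewrite filter_In, in_seq; unfold p. split.
    - intro Hx. destruct (in_dec Nat.eq_dec x l); [|contradiction]. split; auto.
      unfold l in Hx; apply in_map_iff in Hx. destruct Hx as [i0 [<- Hi]].
      apply in_seq in Hi. specialize (Hf i0 ltac:(lia)). lia.
    - intros [_ H]. destruct (in_dec Nat.eq_dec x l); auto; discriminate. }
  assert (Hsplit : forall G, sm G (seq 0 n) = sm G (filter p (seq 0 n)) +
                         sm G (filter (fun v => negb (p v)) (seq 0 n))).
  { intro G. rewrite !sm_filter, <- sm_add. apply sm_ext_in. intros x _.
    destruct (p x); simpl; lia. }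
  assert (Hlen : length l = m) by (unfold l; rewrite length_map, length_seq; auto).
  assert (Hl2 : length (filter p (seq 0 n)) = m) by (rewrite <- (Permutation_length Hperm); auto).
  assert (Hc : length (filter (fun v => negb (p v)) (seq 0 n)) = n - m).
  { assert (H := Hsplit (fun _ => 1)). rewrite !sm_const, length_seq in H. lia. }
  assert (Hs1 : sm F (filter p (seq 0 n)) = sm (fun i => F (f i)) (seq 0 m)).
  { rewrite <- (sm_perm _ _ _ Hperm). unfold l. apply sm_map. }
  assert (Hs2 : sm F (filter (fun v => negb (p v)) (seq 0 n)) <= (n - m) * B).
  { rewrite <- Hc, Nat.mul_comm, <- sm_const. apply sm_le_in. intros x Hx.
    apply filter_In in Hx. destruct Hx as [Hx _]. apply in_seq in Hx. apply HB; lia. }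
  rewrite (Hsplit F), Hs1. split; [lia|]. split; [lia|].
  assert (H := Hsplit (fun _ => 1)). rewrite !sm_const, length_seq in H. lia.
Qed.

Lemma sm_ge_term f l x : In x l -> f x <= sm f l.
Proof. induction l; simpl; [tauto|]. intros [<-|H]; [lia|]. specialize (IHl H); lia. Qed.

Lemma degree_sm n g v : degree n g v = sm (fun u => if g v u then 1 else 0) (seq 0 n).
Proof. unfold degree. apply len_filter. Qed.

Lemma d_sm n g t : d_ n g t = sm (fun v => if Nat.eqb (degree n g v) t then 1 else 0) (seq 0 n).
Proof. unfold d_. apply len_filter. Qed.

Lemma perm_of_inj m f : (forall i, i < m -> f i < m) ->
  (forall i j, i < m -> j < m -> f i = f j -> i = j) ->
  Permutation (map f (seq 0 m)) (seq 0 m).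
Proof.
  intros Hf Hinj. apply NoDup_Permutation_bis.
  - apply NoDup_map_NoDup_ForallPairs; [|apply seq_NoDup].
    intros a b Ha Hb. apply in_seq in Ha; apply in_seq in Hb. apply Hinj; lia.
  - rewrite length_map; lia.
  - intros x Hx. apply in_map_iff in Hx. destruct Hx as [i [<- Hi]]. apply in_seq in Hi.
    apply in_seq. specialize (Hf i ltac:(lia)). lia.
Qed.

Lemma iso_d m g h t : iso m g h -> d_ m g t = d_ m h t.
Proof.
  intros [f [Hf [Hinj Hgh]]].
  assert (Hp := perm_of_inj m f Hf Hinj).
  assert (Hdeg : forall i, i < m -> degree m g i = degree m h (f i)).
  { intros i Hi. rewrite !degree_sm.
    rewrite (sm_ext_in _ (fun u => if h (f i) (f u) then 1 else 0)).
    2:{ intros u Hu. apply in_seq in Hu. rewrite Hgh by lia. reflexivity. }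
    rewrite <- (sm_map (fun w => if h (f i) w then 1 else 0)).
    apply sm_perm; auto. }
  rewrite !d_sm.
  rewrite (sm_ext_in _ (fun v => if Nat.eqb (degree m h (f v)) t then 1 else 0)).
  2:{ intros u Hu. apply in_seq in Hu. rewrite Hdeg by lia. reflexivity. }
  rewrite <- (sm_map (fun w => if Nat.eqb (degree m h w) t then 1 else 0)).
  apply sm_perm; auto.
Qed.

Lemma skip_ne v i : skip v i <> v.
Proof. unfold skip. destruct (Nat.ltb_spec i v); lia. Qed.
Lemma skip_lt n v i : v < n -> i < n - 1 -> skip v i < n.
Proof. unfold skip. destruct (Nat.ltb_spec i v); lia. Qed.
Lemma skip_inj v i j : skip v i = skip v j -> i = j.
Proof. unfold skip. destruct (Nat.ltb_spec i v), (Nat.ltb_spec j v); lia. Qed.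

Lemma perm_skip n v : v < n ->
  Permutation (v :: map (skip v) (seq 0 (n - 1))) (seq 0 n).
Proof.
  intros Hv. apply NoDup_Permutation_bis.
  - constructor.
    + intro H. apply in_map_iff in H. destruct H as [i [H _]]. apply (skip_ne v i); auto.
    + apply NoDup_map_NoDup_ForallPairs; [|apply seq_NoDup].
      intros a b _ _. apply skip_inj.
  - simpl. rewrite length_map, !length_seq. lia.
  - intros x [<-|Hx]. apply in_seq; lia.
    apply in_map_iff in Hx. destruct Hx as [i [<- Hi]]. apply in_seq in Hi.
    apply in_seq. assert (H := skip_lt n v i Hv ltac:(lia)). lia.
Qed.

Lemma sm_skip n v F : v < n ->
  sm F (seq 0 n) = F v + sm (fun i => F (skip v i)) (seq 0 (n - 1)).
Proof.
  intros Hv. rewrite <- (sm_perm _ _ _ (perm_skip n v Hv)). simpl. rewrite sm_map. reflexivity.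
Qed.

Definition ee (n : nat) (G : graph) (t v : nat) : nat :=
  sm (fun u => if G v u && Nat.eqb (degree n G u) t then 1 else 0) (seq 0 n).

Lemma card_identity n G v t : is_graph n G -> v < n ->
  d_ (n - 1) (card G v) t + (if Nat.eqb (degree n G v) t then 1 else 0) + ee n G t v
  = d_ n G t + ee n G (S t) v.
Proof.
  intros [Hirr Hsym] Hv.
  set (deg := degree n G).
  set (Phi := fun u => if Nat.eqb (deg u - (if G v u then 1 else 0)) t then 1 else 0).
  assert (H1 : sm Phi (seq 0 n) = (if Nat.eqb (deg v) t then 1 else 0) + d_ (n - 1) (card G v) t).
  { rewrite (sm_skip n v Phi Hv). unfold Phi at 1. rewrite Hirr by auto. rewrite Nat.sub_0_r.
    f_equal. rewrite d_sm. apply sm_ext_in. intros i Hi. apply in_seq in Hi.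
    assert (Hw := skip_lt n v i Hv ltac:(lia)).
    unfold Phi. f_equal. f_equal.
    unfold deg. rewrite (degree_sm n G (skip v i)), (sm_skip n v _ Hv).
    rewrite (Hsym (skip v i) v) by lia. rewrite degree_sm. unfold card.
    rewrite Nat.add_comm, Nat.add_sub. reflexivity. }
  assert (H2 : sm (fun u => Phi u + (if G v u && Nat.eqb (deg u) t then 1 else 0)) (seq 0 n)
             = sm (fun u => (if Nat.eqb (deg u) t then 1 else 0) + (if G v u && Nat.eqb (deg u) (S t) then 1 else 0)) (seq 0 n)).
  { apply sm_ext_in. intros u Hu. apply in_seq in Hu. unfold Phi.
    destruct (G v u) eqn:E.
    - assert (deg u >= 1).
      { unfold deg. rewrite degree_sm. assert (HH := sm_ge_term (fun w => if G u w then 1 else 0) (seq 0 n) v ltac:(apply in_seq; lia)).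
        simpl in HH. rewrite (Hsym u v) in HH by lia. rewrite E in HH. lia. }
      simpl. destruct (Nat.eqb_spec (deg u - 1) t), (Nat.eqb_spec (deg u) t), (Nat.eqb_spec (deg u) (S t)); lia.
    - simpl. rewrite Nat.sub_0_r. lia. }
  rewrite !sm_add in H2. unfold ee. fold deg. rewrite (d_sm n G t). fold deg. lia.
Qed.

Lemma double_count n G t : is_graph n G ->
  sm (fun v => ee n G t v) (seq 0 n) = t * d_ n G t.
Proof.
  intros [Hirr Hsym]. unfold ee. rewrite sm_swap.
  rewrite d_sm, <- sm_mul. apply sm_ext_in. intros u Hu. apply in_seq in Hu.
  destruct (Nat.eqb_spec (degree n G u) t) as [E|E].
  - rewrite Nat.mul_1_r, <- E, degree_sm. apply sm_ext_in. intros v Hv. apply in_seq in Hv.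
    rewrite (Hsym v u) by lia. destruct (G u v); simpl; lia.
  - rewrite Nat.mul_0_r. rewrite (sm_ext_in _ (fun _ => 0)). rewrite sm_const; lia.
    intros v _. destruct (G v u); reflexivity.
Qed.

Lemma ee_le n G t v : ee n G t v <= d_ n G t.
Proof. unfold ee. rewrite d_sm. apply sm_le_in. intros u _.
  destruct (G v u), (Nat.eqb (degree n G u) t); simpl; lia. Qed.

Lemma sm_ind_nodup x l : NoDup l -> sm (fun t => if Nat.eqb x t then 1 else 0) l <= 1.
Proof.
  induction 1; simpl; [lia|].
  destruct (Nat.eqb_spec x x0); [|lia]. subst.
  rewrite (sm_ext_in _ (fun _ => 0)). rewrite sm_const; lia.
  intros y Hy. destruct (Nat.eqb_spec x0 y); auto. subst; contradiction.
Qed.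

Lemma sum_d_le n G l : NoDup l -> sm (fun t => d_ n G t) l <= n.
Proof.
  intros Hl. rewrite (sm_ext_in _ (fun t => sm (fun v => if Nat.eqb (degree n G v) t then 1 else 0) (seq 0 n))).
  2:{ intros; apply d_sm. }
  rewrite sm_swap. rewrite <- (length_seq n 0) at 2. rewrite <- (Nat.mul_1_l (length _)), <- sm_const.
  apply sm_le_in. intros v _. apply sm_ind_nodup; auto.
Qed.

Lemma d_le n G t : d_ n G t <= n.
Proof. unfold d_. rewrite <- (length_seq n 0) at 2. apply filter_length_le. Qed.

Definition St (n : nat) (Cs : list graph) (t : nat) : nat :=
  sm (fun i => d_ (n - 1) (nth i Cs (fun _ _ => false)) t) (seq 0 (length Cs)).

Lemma graph_eq n G Cs t : is_graph n G -> deck_contains n G Cs ->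
  let m := length Cs in let D := d_ n G in
  m <= n /\
  exists mu nu : nat, mu <= (n - m) * (1 + D t) /\ nu <= (n - m) * D (S t) /\
   m * D t + (S t) * D (S t) + mu = St n Cs t + (S t) * D t + nu.
Proof.
  intros HG [f [Hf [Hinj Hiso]]] m D.
  assert (Hv : forall i, In i (seq 0 m) -> f i < n) by (intros i Hi; apply in_seq in Hi; apply Hf; lia).
  assert (Hsum : sm (fun i => d_ (n - 1) (card G (f i)) t + (if Nat.eqb (degree n G (f i)) t then 1 else 0) + ee n G t (f i)) (seq 0 m)
     = sm (fun i => D t + ee n G (S t) (f i)) (seq 0 m)).
  { apply sm_ext_in. intros i Hi. apply card_identity; auto. }
  rewrite !sm_add, sm_const, length_seq in Hsum.
  assert (HS : sm (fun i => d_ (n - 1) (card G (f i)) t) (seq 0 m) = St n Cs t).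
  { unfold St. apply sm_ext_in. intros i Hi. apply in_seq in Hi. symmetry. apply iso_d. apply Hiso. lia. }
  destruct (inj_sum n m f (fun v => (if Nat.eqb (degree n G v) t then 1 else 0) + ee n G t v) (1 + D t) Hf Hinj)
    as [HP1 [HP2 Hmn]].
  { intros v _. assert (H := ee_le n G t v). destruct (Nat.eqb (degree n G v) t); unfold D; lia. }
  destruct (inj_sum n m f (fun v => ee n G (S t) v) (D (S t)) Hf Hinj) as [HQ1 [HQ2 _]].
  { intros v _. apply ee_le. }
  rewrite !sm_add in HP1, HP2.
  assert (E1 := double_count n G t HG). assert (E2 := double_count n G (S t) HG).
  assert (E3 := d_sm n G t).
  assert (E4 : sm (fun v => ee n G t v) (seq 0 n) = sm (ee n G t) (seq 0 n)) by reflexivity.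
  assert (E5 : sm (fun v => ee n G (S t) v) (seq 0 n) = sm (ee n G (S t)) (seq 0 n)) by reflexivity.
  split; auto.
  set (P1 := sm (fun i => if Nat.eqb (degree n G (f i)) t then 1 else 0) (seq 0 m)) in *.
  set (P2 := sm (fun i => ee n G t (f i)) (seq 0 m)) in *.
  set (Q := sm (fun i => ee n G (S t) (f i)) (seq 0 m)) in *.
  exists (d_ n G t + t * d_ n G t - (P1 + P2)), (S t * D (S t) - Q).
  unfold D in *. simpl. nia.
Qed.

Section Dsec.
Local Open Scope Z_scope.

Lemma zarith_core (a b k D0 D0' DH DH' mu0 nu0 muH nuH S : Z) :
  0 <= k -> 0 <= D0 -> 0 <= D0' -> 0 <= DH -> 0 <= DH' -> 0 <= mu0 -> 0 <= nu0 -> 0 <= muH -> 0 <= nuH ->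
  mu0 <= k * (1 + D0) -> nu0 <= k * D0' -> muH <= k * (1 + DH) -> nuH <= k * DH' ->
  a * D0 + b * D0' = S + nu0 - mu0 -> a * DH + b * DH' = S + nuH - muH ->
  Z.abs (a * (DH - D0) + b * (DH' - D0')) <= k * (2 + 2 * D0 + 2 * D0' + Z.abs (DH - D0) + Z.abs (DH' - D0')).
Proof.
  intros. assert (E : a * (DH - D0) + b * (DH' - D0') = (nuH - nu0) - (muH - mu0)) by nia.
  rewrite E. assert (DH <= D0 + Z.abs (DH - D0)) by lia. assert (DH' <= D0' + Z.abs (DH' - D0')) by lia.
  assert (k * DH <= k * (D0 + Z.abs (DH - D0))) by (apply Z.mul_le_mono_nonneg_l; lia).
  assert (k * DH' <= k * (D0' + Z.abs (DH' - D0'))) by (apply Z.mul_le_mono_nonneg_l; lia).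
  apply Z.abs_le. nia.
Qed.

Definition Cl (n : nat) (Cs : list graph) (H : graph) : Prop := is_graph n H /\ deck_contains n H Cs.

Definition xx (n : nat) (G0 H : graph) (t : nat) : Z := Z.of_nat (d_ n H t) - Z.of_nat (d_ n G0 t).

Definition gg (n k : nat) (G0 : graph) (t : nat) : Z :=
  Z.of_nat k * (2 + 2 * Z.of_nat (d_ n G0 t) + 2 * Z.of_nat (d_ n G0 (S t))).

Lemma pair_rel n Cs G0 H t : Cl n Cs G0 -> Cl n Cs H ->
  let m := length Cs in let k := (n - m)%nat in
  Z.abs ((Z.of_nat m - 1 - Z.of_nat t) * xx n G0 H t + (Z.of_nat t + 1) * xx n G0 H (S t))
   <= gg n k G0 t + Z.of_nat k * (Z.abs (xx n G0 H t) + Z.abs (xx n G0 H (S t))).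
Proof.
  intros [HG0 HD0] [HH HDH] m k.
  destruct (graph_eq n G0 Cs t HG0 HD0) as [Hmn [mu0 [nu0 [Hmu0 [Hnu0 E0]]]]].
  destruct (graph_eq n H Cs t HH HDH) as [_ [muH [nuH [HmuH [HnuH EH]]]]].
  fold m in Hmn, Hmu0, Hnu0, E0, HmuH, HnuH, EH.
  assert (Hz := zarith_core (Z.of_nat m - 1 - Z.of_nat t) (Z.of_nat t + 1) (Z.of_nat k)
    (Z.of_nat (d_ n G0 t)) (Z.of_nat (d_ n G0 (S t))) (Z.of_nat (d_ n H t)) (Z.of_nat (d_ n H (S t)))
    (Z.of_nat mu0) (Z.of_nat nu0) (Z.of_nat muH) (Z.of_nat nuH) (Z.of_nat (St n Cs t))).
  unfold xx, gg. fold k in Hmu0, Hnu0, HmuH, HnuH.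
  assert (Hm : Z.of_nat m - 1 - Z.of_nat t = Z.of_nat m - Z.of_nat (S t)) by lia.
  rewrite Hm in Hz |- *.
  eapply Z.le_trans; [apply Hz|]; clear Hz; try lia.
Qed.

Lemma max_ex (P : nat -> Prop) (n : nat) : (exists m, P m) -> (forall m, P m -> (m <= n)%nat) ->
  exists m, P m /\ forall m', P m' -> (m' <= m)%nat.
Proof.
  induction n; intros [m0 Hm0] Hb.
  - exists m0. split; auto. intros m' Hm'. assert (A1 := Hb m' Hm'). lia.
  - destruct (classic (P (S n))) as [HP|HP].
    + exists (S n). split; auto.
    + apply IHn. exists m0; auto. intros m Hm. specialize (Hb m Hm).
      destruct (Nat.eq_dec m (S n)); [subst; contradiction|lia].
Qed.

Lemma U_exists n Cs G0 : Cl n Cs G0 -> exists U : nat -> nat, forall t,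
  (exists H, Cl n Cs H /\ Z.abs (xx n G0 H t) = Z.of_nat (U t)) /\
  (forall H, Cl n Cs H -> Z.abs (xx n G0 H t) <= Z.of_nat (U t)).
Proof.
  intros HG0.
  assert (Hall : forall t, exists u : nat, (exists H, Cl n Cs H /\ Z.abs (xx n G0 H t) = Z.of_nat u) /\
     (forall H, Cl n Cs H -> Z.abs (xx n G0 H t) <= Z.of_nat u)).
  { intro t. destruct (max_ex (fun u => exists H, Cl n Cs H /\ Z.abs (xx n G0 H t) = Z.of_nat u) n)
      as [u [Hu Hmax]].
    - exists (Z.to_nat (Z.abs (xx n G0 G0 t))). exists G0. split; auto. lia.
    - intros u [H [_ Hx]]. unfold xx in Hx. assert (A1 := d_le n H t). assert (A2 := d_le n G0 t). lia.
    - exists u. split; auto. intros H HH.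
      assert (Hq : Z.abs (xx n G0 H t) = Z.of_nat (Z.to_nat (Z.abs (xx n G0 H t)))) by lia.
      specialize (Hmax (Z.to_nat (Z.abs (xx n G0 H t))) (ex_intro _ H (conj HH Hq))). lia. }
  exists (fun t => proj1_sig (constructive_indefinite_description _ (Hall t))).
  intro t. destruct (constructive_indefinite_description _ (Hall t)) as [u Hu]. simpl. exact Hu.
Qed.

Lemma U_lower n Cs G0 U t : Cl n Cs G0 -> (forall t,
  (exists H, Cl n Cs H /\ Z.abs (xx n G0 H t) = Z.of_nat (U t)) /\
  (forall H, Cl n Cs H -> Z.abs (xx n G0 H t) <= Z.of_nat (U t))) ->
  let m := length Cs in let k := (n - m)%nat in
  (S t <= m)%nat ->
  (Z.of_nat m - 1 - Z.of_nat t - Z.of_nat k) * Z.of_nat (U t)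
   <= (Z.of_nat t + 1 + Z.of_nat k) * Z.of_nat (U (S t)) + gg n k G0 t.
Proof.
  intros HG0 HU m k Ht.
  destruct (HU t) as [[H [HH Hx]] _]. destruct (HU (S t)) as [_ Hb]. specialize (Hb H HH).
  assert (Hr := pair_rel n Cs G0 H t HG0 HH). cbv zeta in Hr. fold m k in Hr.
  set (a := Z.of_nat m - 1 - Z.of_nat t) in *. set (b := Z.of_nat t + 1) in *.
  set (x := xx n G0 H t) in *. set (x' := xx n G0 H (S t)) in *.
  assert (Ha : 0 <= a) by (unfold a; lia).
  assert (E1 : Z.abs (a * x) = a * Z.abs x) by (rewrite Z.abs_mul, (Z.abs_eq a); lia).
  assert (E2 : Z.abs (b * x') = b * Z.abs x') by (rewrite Z.abs_mul, (Z.abs_eq b); unfold b; lia).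
  assert (T := Z.abs_triangle (a * x + b * x') (- (b * x'))).
  replace (a * x + b * x' + - (b * x')) with (a * x) in T by ring.
  rewrite Z.abs_opp in T.
  assert (M1 : (b + Z.of_nat k) * Z.abs x' <= (b + Z.of_nat k) * Z.of_nat (U (S t)))
    by (apply Z.mul_le_mono_nonneg_l; unfold b; lia).
  rewrite <- Hx. nia.
Qed.

Lemma U_upper n Cs G0 U t : Cl n Cs G0 -> (forall t,
  (exists H, Cl n Cs H /\ Z.abs (xx n G0 H t) = Z.of_nat (U t)) /\
  (forall H, Cl n Cs H -> Z.abs (xx n G0 H t) <= Z.of_nat (U t))) ->
  let m := length Cs in let k := (n - m)%nat in
  (Z.of_nat t + 1 - Z.of_nat k) * Z.of_nat (U (S t))
   <= (Z.abs (Z.of_nat m - 1 - Z.of_nat t) + Z.of_nat k) * Z.of_nat (U t) + gg n k G0 t.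
Proof.
  intros HG0 HU m k.
  destruct (HU (S t)) as [[H [HH Hx]] _]. destruct (HU t) as [_ Hb]. specialize (Hb H HH).
  assert (Hr := pair_rel n Cs G0 H t HG0 HH). cbv zeta in Hr. fold m k in Hr.
  set (a := Z.of_nat m - 1 - Z.of_nat t) in *. set (b := Z.of_nat t + 1) in *.
  set (x := xx n G0 H t) in *. set (x' := xx n G0 H (S t)) in *.
  assert (E1 : Z.abs (a * x) = Z.abs a * Z.abs x) by (rewrite Z.abs_mul; lia).
  assert (E2 : Z.abs (b * x') = b * Z.abs x') by (rewrite Z.abs_mul, (Z.abs_eq b); unfold b; lia).
  assert (T := Z.abs_triangle (a * x + b * x') (- (a * x))).
  replace (a * x + b * x' + - (a * x)) with (b * x') in T by ring.
  rewrite Z.abs_opp in T.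
  assert (M1 : (Z.abs a + Z.of_nat k) * Z.abs x <= (Z.abs a + Z.of_nat k) * Z.of_nat (U t))
    by (apply Z.mul_le_mono_nonneg_l; lia).
  rewrite <- Hx. nia.
Qed.

End Dsec.

Open Scope R_scope.

Fixpoint rsum (f : nat -> R) (l : list nat) : R :=
  match l with [] => 0 | x :: r => f x + rsum f r end.

Lemma rsum_app f l1 l2 : rsum f (l1 ++ l2) = rsum f l1 + rsum f l2.
Proof. induction l1; simpl; lra. Qed.

Lemma rsum_nonneg f l : (forall x, 0 <= f x) -> 0 <= rsum f l.
Proof. intros H; induction l; simpl; [lra|]. specialize (H a); lra. Qed.

Lemma rsum_INR u l : rsum (fun j => INR (u j)) l = INR (sm u l).
Proof. induction l; simpl; auto. rewrite plus_INR; lra. Qed.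

Lemma rsum_le f g l : (forall x, In x l -> f x <= g x) -> rsum f l <= rsum g l.
Proof. induction l; simpl; intros H; [lra|].
  specialize (IHl (fun x h => H x (or_intror h))). specialize (H a (or_introl eq_refl)). lra. Qed.

Lemma rsum_const c l : rsum (fun _ => c) l = c * INR (length l).
Proof. induction l; simpl length; [simpl; lra|]. rewrite S_INR. simpl. rewrite IHl. lra. Qed.

Lemma rsum_sub h a l M : (forall x, 0 <= h x) -> (a + l <= M)%nat ->
  rsum h (seq a l) <= rsum h (seq 0 M).
Proof.
  intros H0 Hle. replace M with (a + (l + (M - a - l)))%nat by lia.
  rewrite (seq_app a), (seq_app l). simpl. rewrite !rsum_app.
  assert (0 <= rsum h (seq 0 a)) by (apply rsum_nonneg; auto).
  assert (0 <= rsum h (seq (a + l) (M - a - l))) by (apply rsum_nonneg; auto). lra.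
Qed.

Lemma exists_small (v : nat -> R) L : (1 <= L)%nat ->
  exists j, (j < L)%nat /\ INR L * v j <= rsum v (seq 0 L).
Proof.
  intros HL. apply NNPP. intro Hn.
  assert (Hall : forall j, In j (seq 0 L) -> rsum v (seq 0 L) < INR L * v j).
  { intros j Hj. apply in_seq in Hj. apply Rnot_le_lt. intro Hc. apply Hn. exists j. split; auto. lia. }
  assert (Hs : forall l, l <> [] -> (forall j, In j l -> rsum v (seq 0 L) < INR L * v j) ->
     rsum (fun _ => rsum v (seq 0 L)) l < rsum (fun j => INR L * v j) l).
  { induction l; intros Hne Hl; [congruence|]. simpl.
    destruct l as [|b l].
    - simpl. specialize (Hl a (or_introl eq_refl)). lra.
    - assert (Hlt := IHl ltac:(congruence) (fun j h => Hl j (or_intror h))).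
      specialize (Hl a (or_introl eq_refl)). lra. }
  assert (Hne : seq 0 L <> []) by (destruct L; [lia|simpl; congruence]).
  specialize (Hs _ Hne Hall). rewrite rsum_const, length_seq in Hs.
  assert (E : rsum (fun j => INR L * v j) (seq 0 L) = INR L * rsum v (seq 0 L)).
  { clear. induction (seq 0 L); simpl; lra. }
  rewrite E in Hs. lra.
Qed.

Section Decay.
Variables (u : nat -> nat) (h : nat -> R) (M L : nat) (dl n0 Hs : R).
Hypothesis Hdl : 0 < dl.
Hypothesis Hu0 : INR (u 0) <= n0.
Hypothesis Hrec : forall j, (j < M)%nat -> INR (u (S j)) <= (1 - dl) * INR (u j) + h j.
Hypothesis Hh : forall j, 0 <= h j.
Hypothesis HHs : rsum h (seq 0 M) <= Hs.
Hypothesis HL : (1 <= L)%nat.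

Lemma tel a l : (a + l <= M)%nat ->
  dl * rsum (fun j => INR (u j)) (seq a l) <= INR (u a) - INR (u (a + l)) + rsum h (seq a l).
Proof.
  induction l; intros Hl.
  - simpl. rewrite Nat.add_0_r. lra.
  - rewrite seq_S, !rsum_app. simpl. specialize (IHl ltac:(lia)).
    specialize (Hrec (a + l) ltac:(lia)). replace (a + S l)%nat with (S (a + l)) by lia. lra.
Qed.

Lemma decay :
  INR (sm (fun j => if Nat.eqb (u j) 0 then 0 else 1)%nat (seq 0 (S M)))
  <= INR L + 1 + (n0 + Hs) / (dl * dl * INR L) + Hs / dl.
Proof.
  assert (HLp : 0 < INR L) by (apply lt_0_INR; lia).
  assert (HHs0 : 0 <= Hs) by (eapply Rle_trans; [apply rsum_nonneg; auto|exact HHs]).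
  assert (Hn0 : 0 <= n0) by (eapply Rle_trans; [apply pos_INR|exact Hu0]).
  assert (T1 : 0 <= (n0 + Hs) / (dl * dl * INR L)).
  { apply Rle_mult_inv_pos; [lra|]. apply Rmult_lt_0_compat; auto. apply Rmult_lt_0_compat; auto. }
  assert (T2 : 0 <= Hs / dl) by (apply Rle_mult_inv_pos; lra).
  assert (Hind : forall l, INR (sm (fun j => if Nat.eqb (u j) 0 then 0 else 1)%nat l) <= rsum (fun j => INR (u j)) l).
  { intro l. rewrite rsum_INR. apply le_INR. apply sm_le_in. intros x _. destruct (Nat.eqb_spec (u x) 0); lia. }
  assert (Hcnt : forall l, INR (sm (fun j => if Nat.eqb (u j) 0 then 0 else 1)%nat l) <= INR (length l)).
  { intro l. apply le_INR. rewrite <- (Nat.mul_1_l (length l)), <- sm_const. apply sm_le_in.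
    intros x _. destruct (Nat.eqb (u x) 0); lia. }
  destruct (le_lt_dec L M) as [HLM|HLM].
  -
    set (A := (n0 + Hs) / (dl * dl * INR L)) in *.
    set (B := Hs / dl) in *.
    assert (EA : dl * dl * INR L * A = n0 + Hs) by (unfold A; field; lra).
    assert (EB : dl * B = Hs) by (unfold B; field; lra).
    assert (S1 := tel 0 L ltac:(lia)). simpl in S1.
    assert (S1' : dl * rsum (fun j => INR (u j)) (seq 0 L) <= n0 + Hs).
    { assert (rsum h (seq 0 L) <= Hs) by (eapply Rle_trans; [apply (rsum_sub h 0 L M); auto|auto]).
      assert (0 <= INR (u L)) by apply pos_INR. lra. }
    destruct (exists_small (fun j => INR (u j)) L HL) as [js [Hjs Hsm]].
    assert (Hujs : INR (u js) <= dl * A).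
    { apply (Rmult_le_reg_l (dl * INR L)). apply Rmult_lt_0_compat; auto.
      assert (dl * (INR L * INR (u js)) <= dl * rsum (fun j => INR (u j)) (seq 0 L))
        by (apply Rmult_le_compat_l; lra). nra. }
    assert (S2 := tel js (M - js) ltac:(lia)).
    assert (S2' : dl * rsum (fun j => INR (u j)) (seq js (M - js)) <= dl * (A + B)).
    { assert (rsum h (seq js (M - js)) <= Hs) by (eapply Rle_trans; [apply (rsum_sub h js (M - js) M); auto; lia|auto]).
      assert (0 <= INR (u (js + (M - js)))) by apply pos_INR. lra. }
    apply Rmult_le_reg_l in S2'; auto.
    replace (seq 0 (S M)) with (seq 0 js ++ seq js (M - js) ++ [M]).
    2:{ rewrite seq_S. replace (0 + M)%nat with M by lia. rewrite app_assoc, <- seq_app.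
        replace (js + (M - js))%nat with M by lia. reflexivity. }
    rewrite !sm_app, !plus_INR.
    assert (C1 := Hcnt (seq 0 js)). rewrite length_seq in C1.
    assert (C2 := Hind (seq js (M - js))).
    assert (C3 := Hcnt [M]). simpl length in C3.
    assert (INR js <= INR L) by (apply le_INR; lia).
    change (INR 1) with 1 in C3. lra.
  - assert (C := Hcnt (seq 0 (S M))). rewrite length_seq in C.
    assert (INR (S M) <= INR L) by (apply le_INR; lia). lra.
Qed.
End Decay.

Open Scope R_scope.

Lemma rsum_perm f l1 l2 : Permutation l1 l2 -> rsum f l1 = rsum f l2.
Proof. induction 1; simpl; lra. Qed.

Lemma rsum_map f g l : rsum f (map g l) = rsum (fun x => f (g x)) l.
Proof. induction l; simpl; auto. rewrite IHl; auto. Qed.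

Lemma rev_perm N : Permutation (map (fun j => (N - 1 - j)%nat) (seq 0 N)) (seq 0 N).
Proof. apply perm_of_inj; intros; lia. Qed.

Lemma map_add_seq a M : map (fun j => (a + j)%nat) (seq 0 M) = seq a M.
Proof. induction M; auto. rewrite !seq_S, map_app, IHM. simpl. f_equal. Qed.

Lemma rsum_scal c f l : rsum (fun x => f x / c) l = rsum f l / c.
Proof. induction l; simpl. unfold Rdiv; lra. rewrite IHl. unfold Rdiv; lra. Qed.

Lemma gg_sum n k G0 l : NoDup l -> (forall t, In t l -> (t < n)%nat) ->
  rsum (fun t => IZR (gg n k G0 t)) l <= 6 * INR k * INR n.
Proof.
  intros Hnd Hl.
  assert (Hlen : (length l <= n)%nat).
  { rewrite <- (length_seq n 0). apply NoDup_incl_length; auto. intros x Hx. apply in_seq. specialize (Hl x Hx). lia. }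
  set (F := fun t => (k * (2 + 2 * d_ n G0 t + 2 * d_ n G0 (S t)))%nat).
  assert (E : forall l, rsum (fun t => IZR (gg n k G0 t)) l = INR (sm F l)).
  { induction l0; simpl; auto. rewrite IHl0, plus_INR. f_equal.
    rewrite INR_IZR_INZ. f_equal. unfold gg, F. lia. }
  rewrite E. apply (Rle_trans _ (INR (k * (6 * n)))).
  2:{ rewrite mult_INR, mult_INR. simpl (INR 6). lra. }
  apply le_INR. unfold F.
  assert (H1 := sum_d_le n G0 l Hnd).
  assert (H2 : (sm (fun t => d_ n G0 (S t)) l <= n)%nat).
  { rewrite <- sm_map. apply sum_d_le. apply NoDup_map_NoDup_ForallPairs; auto. intros a b _ _; lia. }
  rewrite (sm_ext_in _ (fun t => k * 2 + (k * 2 * d_ n G0 t + k * 2 * d_ n G0 (S t))))%nat by (intros; lia).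
  rewrite !sm_add, !sm_mul, sm_const.
  change (sm (fun t => d_ n G0 t) l) with (sm (d_ n G0) l) in H1. nia.
Qed.

Lemma rec_conv (A B g U U' D nn : R) : 0 < D -> A <= nn -> 0 <= B -> D <= A - B -> 0 <= g ->
  0 <= U -> 0 <= U' -> A * U <= B * U' + g -> U <= (1 - D / nn) * U' + g / D.
Proof.
  intros HD HA HB HAB Hg HU HU' H.
  assert (HA0 : 0 < A) by lra. assert (Hnn : 0 < nn) by lra.
  assert (E1 : A * (D / nn) <= D).
  { unfold Rdiv. apply (Rmult_le_reg_r nn); auto. rewrite Rmult_assoc, Rmult_assoc, Rinv_l by lra.
    nra. }
  assert (E2 : g <= A * (g / D)).
  { unfold Rdiv. apply (Rmult_le_reg_r D); auto. rewrite Rmult_assoc, Rmult_assoc, Rinv_l by lra.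
    nra. }
  assert (0 <= D / nn) by (apply Rle_mult_inv_pos; lra).
  apply (Rmult_le_reg_l A); auto. nra.
Qed.

Lemma sm_rev F N : sm F (seq 0 N) = sm (fun j => F (N - 1 - j)%nat) (seq 0 N).
Proof. rewrite <- (sm_perm _ _ _ (rev_perm N)). apply sm_map. Qed.

Lemma rsum_rev f N : rsum f (seq 0 N) = rsum (fun j => f (N - 1 - j)%nat) (seq 0 N).
Proof. rewrite <- (rsum_perm _ _ _ (rev_perm N)). apply rsum_map. Qed.

Lemma div_le a b c : 0 < b -> a <= c * b -> a / b <= c.
Proof. intros Hb H. unfold Rdiv. apply (Rmult_le_reg_r b); auto.
  rewrite Rmult_assoc, Rinv_l by lra. lra. Qed.

Lemma final_bound (n k W P C : R) : 1 <= n -> 1 <= P -> P <= W -> W <= P + 1 -> 0 <= k ->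
  k * (n * n) <= C * (P * P * P) -> n * n * n <= P * P * P * P -> n <= P * P -> 0 < C ->
  W + 1 + (n + 3 * k * n / W) / (2 * W / n * (2 * W / n) * W) + 3 * k * n / W / (2 * W / n)
  <= (4 + 3 * C) * P.
Proof.
  intros Hn HP HPW HW Hk Hkn Hn3 Hn2 HC.
  assert (HW0 : 0 < W) by lra.
  assert (E1 : 3 * k * n / W / (2 * W / n) = 3 * (k * (n * n)) / (2 * (W * W))) by (field; lra).
  assert (E2 : (n + 3 * k * n / W) / (2 * W / n * (2 * W / n) * W)
     = (n * n * n) / (4 * (W * W * W)) + 3 * (k * (n * n)) * n / (4 * (W * W * W * W))) by (field; lra).
  rewrite E1, E2.
  assert (W2 : P * P <= W * W) by nra.
  assert (W3 : P * P * P <= W * W * W) by nra.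
  assert (W4 : P * P * P * P <= W * W * W * W) by nra.
  assert (X1 : n * n * n / (4 * (W * W * W)) <= P / 4).
  { apply div_le. nra. nra. }
  assert (X2 : 3 * (k * (n * n)) * n / (4 * (W * W * W * W)) <= 3 * C * P / 4).
  { apply div_le. nra.
    assert (3 * (k * (n * n)) * n <= 3 * C * (P * P * P) * (P * P)).
    { apply Rmult_le_compat; nra. }
    assert (C * P * (P * P * P * P) <= C * P * (W * W * W * W)) by (apply Rmult_le_compat_l; nra).
    lra. }
  assert (X3 : 3 * (k * (n * n)) / (2 * (W * W)) <= 3 * C * P / 2).
  { apply div_le. nra.
    assert (P * (P * P) <= P * (W * W)) by (apply Rmult_le_compat_l; lra).
    assert (C * (P * (P * P)) <= C * (P * (W * W))) by (apply Rmult_le_compat_l; lra).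
    nra. }
  assert (0 <= C * P) by nra. nra.
Qed.

Open Scope R_scope.

Lemma pow_facts beta n : 0 <= beta -> beta < 1 -> 1 <= n ->
  let P := Rpower n (3/4 + 1/4 * beta) in
  1 <= P /\ Rpower n beta <= P /\ Rpower n beta * (n * n) <= P * P * P /\
  n * n * n <= P * P * P * P /\ n <= P * P.
Proof.
  intros hb0 hb1 Hn P.
  assert (E1 : n = Rpower n 1) by (rewrite Rpower_1; lra).
  assert (E0 : 1 = Rpower n 0) by (rewrite Rpower_O; lra).
  split; [|split; [|split; [|split]]].
  - rewrite E0 at 1. apply Rle_Rpower; lra.
  - apply Rle_Rpower; lra.
  - rewrite E1 at 2 3. rewrite <- !Rpower_plus. unfold P. rewrite <- !Rpower_plus. apply Rle_Rpower; lra.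
  - rewrite E1 at 1 2 3. rewrite <- !Rpower_plus. unfold P. rewrite <- !Rpower_plus. apply Rle_Rpower; lra.
  - rewrite E1 at 1. unfold P. rewrite <- !Rpower_plus. apply Rle_Rpower; lra.
Qed.

Lemma U_le_n n Cs G0 U (t : nat) : (forall t,
  (exists H, Cl n Cs H /\ Z.abs (xx n G0 H t) = Z.of_nat (U t)) /\
  (forall H, Cl n Cs H -> (Z.abs (xx n G0 H t) <= Z.of_nat (U t))%Z)) -> (U t <= n)%nat.
Proof.
  intros HU. destruct (HU t) as [[H [_ Hx]] _]. unfold xx in Hx.
  assert (A1 := d_le n H t). assert (A2 := d_le n G0 t). lia.
Qed.

Lemma gg_nonneg n k G0 t : (0 <= gg n k G0 t)%Z.
Proof. unfold gg. lia. Qed.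

Lemma rsum_eq f g l : (forall x, In x l -> f x = g x) -> rsum f l = rsum g l.
Proof. intros H. apply Rle_antisym; apply rsum_le; intros x Hx; rewrite H; auto; lra. Qed.

Theorem lemma6 (beta C : R) (hb0 : 0 <= beta) (hb1 : beta < 1) (hC : 0 < C) :
  exists c : R, 0 < c /\
  exists N : nat, forall n k : nat, (N <= n)%nat ->
    INR k <= C * Rpower (INR n) beta ->
    forall Cs : list graph,
      length Cs = (n - k)%nat ->
      Forall (is_graph (n - 1)) Cs ->
      exists J : list nat,
        NoDup J /\ (forall t, In t J -> (t < n)%nat) /\
        INR (length J) >= INR n - c * Rpower (INR n) (3/4 + 1/4 * beta) /\
        forall G H : graph,
          is_graph n G -> is_graph n H ->
          deck_contains n G Cs -> deck_contains n H Cs ->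
          forall t, In t J -> d_ n G t = d_ n H t.
Proof.
  exists (20 + 10 * C). split; [lra|]. exists 1%nat.
  intros n k Hn Hk Cs Hlen _.
  assert (Hn1 : 1 <= INR n) by (apply (le_INR 1); lia).
  destruct (pow_facts beta (INR n) hb0 hb1 Hn1) as [HP1 [HPb [HP3 [HP4 HP2]]]].
  set (P := Rpower (INR n) (3/4 + 1/4 * beta)) in *.
  assert (HkP : INR k <= C * P) by (eapply Rle_trans; [exact Hk|]; apply Rmult_le_compat_l; lra).
  assert (HcP : 0 <= (20 + 10 * C) * P) by nra.
  destruct (archimed P) as [Hup1 Hup2].
  set (W := Z.to_nat (up P)).
  assert (HW : INR W = IZR (up P)).
  { unfold W. rewrite INR_IZR_INZ, Z2Nat.id; auto. apply le_IZR. lra. }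
  assert (HW1 : P <= INR W <= P + 1) by lra.
  assert (HW1n : (1 <= W)%nat) by (apply INR_le; simpl; lra).
  destruct (classic (exists G0, Cl n Cs G0)) as [[G0 HG0]|Hno].
  2:{ exists (seq 0 n). split; [apply seq_NoDup|]. split; [intros t Ht; apply in_seq in Ht; lia|].
      split. rewrite length_seq. lra.
      intros G H HG _ HDG _. exfalso. apply Hno. exists G. split; auto. }
  destruct (lt_dec n (3 * k + 2 * W + 4)) as [Hsmall|Hbig].
  { exists []. split; [constructor|]. split; [intros t []|]. split; [|intros G H _ _ _ _ t []].
    simpl length. apply lt_INR in Hsmall. rewrite !plus_INR, !mult_INR in Hsmall. simpl (INR 3) in Hsmall.
    simpl (INR 2) in Hsmall. simpl (INR 4) in Hsmall. simpl (INR 0). nra. }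
  assert (Hbig' : (3 * k + 2 * W + 4 <= n)%nat) by lia.
  set (m := length Cs) in *.
  destruct (U_exists n Cs G0 HG0) as [U HU].
  set (good := fun t => if excluded_middle_informative (forall H, Cl n Cs H -> d_ n H t = d_ n G0 t) then true else false).
  exists (filter good (seq 0 n)).
  split; [apply NoDup_filter, seq_NoDup|].
  split; [intros t Ht; apply filter_In in Ht; destruct Ht as [Ht _]; apply in_seq in Ht; lia|].
  split.
  2:{ intros G H HG HH HDG HDH t Ht. apply filter_In in Ht. destruct Ht as [_ Ht]. unfold good in Ht.
      destruct (excluded_middle_informative _) as [Hg|]; [|discriminate].
      rewrite (Hg G), (Hg H); auto; split; auto. }
  set (ind := fun t => if Nat.eqb (U t) 0 then 0%nat else 1%nat).
  assert (Hbad : (length (filter (fun t => negb (good t)) (seq 0 n)) <= sm ind (seq 0 n))%nat).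
  { rewrite len_filter. apply sm_le_in. intros t _. unfold good, ind.
    destruct (excluded_middle_informative _) as [Hg|Hg]; simpl; [lia|].
    destruct (Nat.eqb_spec (U t) 0) as [E|E]; [|lia]. exfalso. apply Hg. intros H HH.
    destruct (HU t) as [_ Hb]. specialize (Hb H HH). rewrite E in Hb. unfold xx in Hb. lia. }
  assert (Hfl := filter_length good (seq 0 n)). rewrite length_seq in Hfl.
  set (T1 := ((m - 2 * W - 2 * k) / 2)%nat).
  set (T2 := ((m + 2 * k + 2 * W) / 2)%nat).
  assert (HT1 : (2 * T1 <= m - 2 * W - 2 * k)%nat) by (unfold T1; apply Nat.Div0.mul_div_le; lia).
  assert (HT1b : (m - 2 * W - 2 * k <= 2 * T1 + 1)%nat).
  { unfold T1. assert (Hd := Nat.div_mod (m - 2 * W - 2 * k) 2 ltac:(lia)).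
    assert (Hm := Nat.mod_upper_bound (m - 2 * W - 2 * k) 2 ltac:(lia)). lia. }
  assert (HT2a : (2 * T2 <= m + 2 * k + 2 * W)%nat) by (unfold T2; apply Nat.Div0.mul_div_le; lia).
  assert (HT2b : (m + 2 * k + 2 * W <= 2 * T2 + 1)%nat).
  { unfold T2. assert (Hd := Nat.div_mod (m + 2 * k + 2 * W) 2 ltac:(lia)).
    assert (Hm := Nat.mod_upper_bound (m + 2 * k + 2 * W) 2 ltac:(lia)). lia. }
  assert (Hmk : m = (n - k)%nat) by auto.
  assert (HT12 : (T1 <= T2)%nat) by lia.
  assert (HT2n : (T2 < n)%nat) by lia.
  assert (Hsplit : seq 0 n = seq 0 T1 ++ seq T1 (T2 - T1) ++ seq T2 (n - T2)).
  { replace n with (T1 + ((T2 - T1) + (n - T2)))%nat at 1 by lia.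
    rewrite seq_app, seq_app. simpl (0 + T1)%nat. replace (T1 + (T2 - T1))%nat with T2 by lia. reflexivity. }
  assert (Hmid : (sm ind (seq T1 (T2 - T1)) <= 2 * k + 2 * W + 1)%nat).
  { eapply Nat.le_trans. apply (sm_le_in _ (fun _ => 1%nat)). intros; unfold ind; destruct (Nat.eqb (U x) 0); lia.
    rewrite sm_const, length_seq. lia. }
  assert (Hlow0 : (sm ind (seq 0 T1) <= sm ind (seq 0 (S T1)))%nat) by (rewrite seq_S, sm_app; lia).
  set (dl := 2 * INR W / INR n).
  set (Hs := 3 * INR k * INR n / INR W).
  assert (HWp : 0 < INR W) by lra.
  assert (Hdl : 0 < dl) by (unfold dl; apply Rdiv_lt_0_compat; lra).
  assert (Bnd : INR W + 1 + (INR n + Hs) / (dl * dl * INR W) + Hs / dl <= (4 + 3 * C) * P).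
  { apply final_bound; [lra|lra|lra|lra|apply pos_INR| |lra|lra|lra].
    assert (INR k * (INR n * INR n) <= C * Rpower (INR n) beta * (INR n * INR n)).
    { apply Rmult_le_compat_r; auto. nra. }
    nra. }
  assert (Hlow : INR (sm ind (seq 0 (S T1))) <= (4 + 3 * C) * P).
  { eapply Rle_trans; [|exact Bnd].
    rewrite sm_rev.
    rewrite (sm_ext_in _ (fun j => if Nat.eqb (U (T1 - j)%nat) 0 then 0%nat else 1%nat)).
    2:{ intros j _. unfold ind. replace (S T1 - 1 - j)%nat with (T1 - j)%nat by lia. reflexivity. }
    apply (decay (fun j => U (T1 - j)%nat) (fun j => IZR (gg n k G0 (T1 - S j)) / (2 * INR W)) T1 W dl (INR n) Hs); auto.
    - apply le_INR. eapply U_le_n; eauto.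
    - intros j Hj. set (t := (T1 - S j)%nat).
      replace (T1 - S j)%nat with t by auto. replace (T1 - j)%nat with (S t) by (unfold t; lia).
      assert (Hz := U_lower n Cs G0 U t HG0 HU). cbv zeta in Hz. fold m in Hz.
      replace (n - m)%nat with k in Hz by lia.
      specialize (Hz ltac:(unfold t; lia)).
      apply IZR_le in Hz. rewrite plus_IZR, !mult_IZR, <- !INR_IZR_INZ in Hz.
      unfold dl. apply (rec_conv (IZR (Z.of_nat m - 1 - Z.of_nat t - Z.of_nat k)) (IZR (Z.of_nat t + 1 + Z.of_nat k))); auto.
      + lra.
      + rewrite INR_IZR_INZ. apply IZR_le. lia.
      + apply IZR_le. lia.
      + rewrite INR_IZR_INZ. rewrite <- mult_IZR, <- minus_IZR. apply IZR_le. unfold t. lia.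
      + apply IZR_le, gg_nonneg.
      + apply pos_INR.
      + apply pos_INR.
    - intros j. apply Rle_mult_inv_pos; [apply IZR_le, gg_nonneg|lra].
    - rewrite rsum_scal. unfold Hs.
      rewrite (rsum_eq _ (fun j => IZR (gg n k G0 (T1 - 1 - j)))) by (intros j _; f_equal; f_equal; lia).
      rewrite <- (rsum_rev (fun t => IZR (gg n k G0 t))).
      assert (Hg := gg_sum n k G0 (seq 0 T1) (seq_NoDup _ _) ltac:(intros t Ht; apply in_seq in Ht; lia)).
      replace (3 * INR k * INR n / INR W) with (6 * INR k * INR n / (2 * INR W)) by (field; lra).
      unfold Rdiv. apply Rmult_le_compat_r; auto. left; apply Rinv_0_lt_compat; lra. }
  set (M := (n - 1 - T2)%nat).
  assert (Hup : INR (sm ind (seq T2 (n - T2))) <= (4 + 3 * C) * P).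
  { eapply Rle_trans; [|exact Bnd].
    replace (n - T2)%nat with (S M) by (unfold M; lia).
    rewrite <- map_add_seq, sm_map.
    apply (decay (fun j => U (T2 + j)%nat) (fun j => IZR (gg n k G0 (T2 + j)) / (2 * INR W)) M W dl (INR n) Hs); auto.
    - apply le_INR. eapply U_le_n; eauto.
    - intros j Hj. set (t := (T2 + j)%nat).
      replace (T2 + S j)%nat with (S t) by (unfold t; lia).
      assert (Hz := U_upper n Cs G0 U t HG0 HU). cbv zeta in Hz. fold m in Hz.
      replace (n - m)%nat with k in Hz by lia.
      apply IZR_le in Hz. rewrite plus_IZR, !mult_IZR, <- !INR_IZR_INZ in Hz.
      unfold dl. apply (rec_conv (IZR (Z.of_nat t + 1 - Z.of_nat k)) (IZR (Z.abs (Z.of_nat m - 1 - Z.of_nat t) + Z.of_nat k))); auto.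
      + lra.
      + rewrite INR_IZR_INZ. apply IZR_le. unfold t, M in *. lia.
      + apply IZR_le. lia.
      + rewrite INR_IZR_INZ. rewrite <- mult_IZR, <- minus_IZR. apply IZR_le. unfold t. lia.
      + apply IZR_le, gg_nonneg.
      + apply pos_INR.
      + apply pos_INR.
    - intros j. apply Rle_mult_inv_pos; [apply IZR_le, gg_nonneg|lra].
    - rewrite rsum_scal. unfold Hs.
      rewrite <- (rsum_map (fun t => IZR (gg n k G0 t))), map_add_seq.
      assert (Hg := gg_sum n k G0 (seq T2 M) (seq_NoDup _ _) ltac:(intros t Ht; apply in_seq in Ht; unfold M in *; lia)).
      replace (3 * INR k * INR n / INR W) with (6 * INR k * INR n / (2 * INR W)) by (field; lra).
      unfold Rdiv. apply Rmult_le_compat_r; auto. left; apply Rinv_0_lt_compat; lra. }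
  assert (Hcnt : (sm ind (seq 0 n) <= sm ind (seq 0 (S T1)) + (2 * k + 2 * W + 1) + sm ind (seq T2 (n - T2)))%nat).
  { rewrite Hsplit, !sm_app. lia. }
  apply le_INR in Hcnt. rewrite !plus_INR, !mult_INR in Hcnt. simpl (INR 2) in Hcnt. simpl (INR 1) in Hcnt.
  assert (Hl : length (filter good (seq 0 n)) = (n - length (filter (fun t => negb (good t)) (seq 0 n)))%nat) by lia.
  assert (Hbad' := le_INR _ _ Hbad).
  assert (INR (length (filter good (seq 0 n))) + INR (length (filter (fun t => negb (good t)) (seq 0 n))) = INR n).
  { rewrite <- plus_INR. f_equal. lia. }
  assert (0 <= C * P) by nra.
  nra.
Qed.
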